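(* Let $n,k$ be positive integers with $k$ odd and $\gcd(k,n)=1$, let $d=\frac{3^k+1}{2}$ and $F(x)=x^d$ on $\mathrm{GF}(3^n)$. Then $F$ is almost perfect $c$-nonlinear for $c=-1$.
   Context: For a function $F:\mathrm{GF}(p^n)\to\mathrm{GF}(p^n)$ and $a,b,c\in\mathrm{GF}(p^n)$, let ${}_c\Delta_F(a,b)=\#\{x\in\mathrm{GF}(p^n): F(x+a)-cF(x)=b\}$. The $c$-differential uniformity of $F$ is ${}_c\Delta_F=\max\{{}_c\Delta_F(a,b): a,b\in\mathrm{GF}(p^n),\ \text{and } a\neq 0 \text{ if } c=1\}$. $F$ is almost perfect $c$-nonlinear (AP$c$N) if ${}_c\Delta_F=2$. *)

(* Defs.v *)
From HB Require Import structures.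
From mathcomp Require Import all_boot all_order all_algebra all_field.
Set Implicit Arguments. Unset Strict Implicit. Unset Printing Implicit Defensive.
Import GRing.Theory.
Local Open Scope ring_scope.

Definition cdiff_count (F : finFieldType) (f : F -> F) (c a b : F) : nat :=
  #|[set x : F | f (x + a) - c * f x == b]|.

Definition cdiff_unif (F : finFieldType) (f : F -> F) (c : F) : nat :=
  \max_(ab : F * F | (c != 1) || (ab.1 != 0)) cdiff_count f c ab.1 ab.2.

Definition APcN (F : finFieldType) (f : F -> F) (c : F) : Prop :=
  cdiff_unif f c = 2%N.

(* Main.v *)
Require Import Defs.
From HB Require Import structures.
From mathcomp Require Import all_boot all_order all_algebra all_field.
From mathcomp Require Import zify ring.
Set Implicit Arguments. Unset Strict Implicit.
Import GRing.Theory.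
Local Open Scope ring_scope.

Lemma pow_gcd (R : nzRingType) (r : R) (c a b : nat) :
  r ^+ (c ^ a) = r -> r ^+ (c ^ b) = r -> r ^+ (c ^ (gcdn a b)) = r.
Proof.
have addP x y : r ^+ (c ^ x) = r -> r ^+ (c ^ (x + y)) = r ^+ (c ^ y).
  by move=> Hx; rewrite expnD exprM Hx.
have mulP x m : r ^+ (c ^ x) = r -> r ^+ (c ^ (x * m)) = r.
  move=> Hx; elim: m => [|m IH]; first by rewrite muln0 expn0 expr1.
  by rewrite mulnS addP.
elim: a {-2}a (leqnn a) b => [|N IHN] a.
  by rewrite leqn0 => /eqP -> b _ Hb; rewrite gcd0n.
rewrite leq_eqVlt => /orP [/eqP Ha|]; last by rewrite ltnS; exact: IHN.
move=> b Ha' Hb; rewrite gcdnC -gcdn_modl.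
have Hm : r ^+ (c ^ (b %% a)%N) = r.
  have := addP (b %/ a * a)%N (b %% a)%N _.
  by rewrite -divn_eq Hb => <- //; rewrite mulnC mulP.
apply: IHN => //; by rewrite -ltnS -Ha ltn_mod Ha.
Qed.

Lemma odd_form m : exists j, (3 ^ (m.*2.+1) + 1 = 4 + 8 * j)%N.
Proof.
elim: m => [|m [j Hj]]; first by exists 0%N.
exists (3 + 9 * j)%N.
rewrite doubleS expnS expnS; lia.
Qed.

Section K.
Variable K : fieldType.
Hypothesis p3 : 3%N \in [pchar K].

Lemma three0 : (3%:R : K) = 0. Proof. exact: pcharf0 p3. Qed.

Lemma nat3 m : [pchar K].-nat (3 ^ m)%N.
Proof. by rewrite (eq_pnat _ (pcharf_eq p3)) pnatX pnat_id. Qed.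

Lemma frobD m (x y : K) : (x + y) ^+ (3 ^ m)%N = x ^+ (3 ^ m)%N + y ^+ (3 ^ m)%N.
Proof. exact: exprDn_pchar (nat3 m). Qed.

Lemma frobN m (x : K) : (- x) ^+ (3 ^ m)%N = - x ^+ (3 ^ m)%N.
Proof. exact: exprNn_pchar (nat3 m). Qed.

Lemma frobB m (x y : K) : (x - y) ^+ (3 ^ m)%N = x ^+ (3 ^ m)%N - y ^+ (3 ^ m)%N.
Proof. by rewrite frobD frobN. Qed.

Lemma r4 (r : K) k n : odd k -> coprime k n ->
  r ^+ (3 ^ k)%N.+1 = 1 -> r ^+ (9 ^ n)%N = r -> r ^+ 4 = 1.
Proof.
move=> ok cop Hq Hn.
have r0 : r != 0.
  by apply/eqP => r0; move: Hq; rewrite r0 expr0n /= => /eqP; rewrite eq_sym oner_eq0.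
have Hk : r ^+ (9 ^ k)%N = r.
  have -> : (9 ^ k = 3 ^ k * 3 ^ k)%N by rewrite -expnMn.
  have Hi : r ^+ (3 ^ k) = r^-1.
    by apply: (mulIf r0); rewrite -exprSr Hq mulVf.
  by rewrite exprM Hi exprVn Hi invrK.
have := @pow_gcd _ _ _ _ _ Hk Hn; move: cop; rewrite /coprime => /eqP -> /=.
rewrite expn1 => H9.
have H8 : r ^+ 8 = 1.
  by apply: (mulIf r0); rewrite -exprSr H9 mul1r.
have [m Hm] : exists m, k = m.*2.+1.
  by exists k./2; rewrite -[LHS](odd_double_half k) ok add1n.
have [j Hj] := odd_form m.
by move: Hq; rewrite -addn1 Hm Hj exprD exprM H8 expr1n mulr1.
Qed.


Variables (k n : nat).
Hypotheses (ok : odd k) (cop : coprime k n).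
Local Notation q := (3 ^ k)%N.
Local Notation N := (9 ^ n)%N.

Lemma N3 : N = (3 ^ (2 * n))%N. Proof. by rewrite expnM. Qed.

Lemma fin_add (x y : K) : x ^+ N = x -> y ^+ N = y -> (x + y) ^+ N = x + y.
Proof. by rewrite N3 frobD => -> ->. Qed.

Lemma fin_opp (x : K) : x ^+ N = x -> (- x) ^+ N = - x.
Proof. by rewrite N3 frobN => ->. Qed.

Lemma fin_div (x y : K) : x ^+ N = x -> y ^+ N = y -> (x / y) ^+ N = x / y.
Proof. by rewrite exprMn exprVn => -> ->. Qed.

Lemma fin_sqrt (w X : K) : w ^+ 2 = X -> X ^+ (3 ^ n)%N = X -> w ^+ N = w.
Proof.
move=> <- H.
have : (w ^+ (3 ^ n)%N - w) * (w ^+ (3 ^ n)%N + w) = 0.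
  by rewrite -subr_sqr -exprM mulnC exprM H subrr.
have -> : N = (3 ^ n * 3 ^ n)%N by rewrite -expnMn.
rewrite exprM; move/eqP; rewrite mulf_eq0 => /orP [|]; rewrite ?subr_eq0 ?addr_eq0 => /eqP H1.
  by rewrite H1 H1.
by rewrite H1 frobN H1 opprK.
Qed.

Lemma two_neq0 : (2%:R : K) != 0.
Proof.
apply/eqP => H; have : (3%:R : K) = 1 by rewrite -[3%N]/(2 + 1)%N natrD H add0r.
by rewrite three0 => /eqP; rewrite eq_sym oner_eq0.
Qed.

Lemma core (A t1 t2 : K) : t1 != 0 -> t2 != 0 -> t1 ^+ q.+1 = t2 ^+ q.+1 ->
  t1 ^+ N = t1 -> t2 ^+ N = t2 ->
  (t2 - A / t2) ^+ 2 = (t1 - A / t1) ^+ 2 \/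
  (t2 - A / t2) ^+ 2 = - (t1 - A / t1) ^+ 2 - A.
Proof.
move=> nz1 nz2 Hq f1 f2.
pose r := t2 / t1.
have Hr : r ^+ q.+1 = 1 by rewrite /r exprMn exprVn -Hq divff // expf_neq0.
have := r4 ok cop Hr (fin_div f2 f1); move=> /eqP; rewrite -subr_eq0.
have -> : r ^+ 4 - 1 = (r ^+ 2 - 1) * (r ^+ 2 + 1) by ring.
have Ht2 : t2 = r * t1 by rewrite /r divfK.
have ex t : t != 0 -> (t - A / t) ^+ 2 = t ^+ 2 - 2%:R * A + A ^+ 2 / t ^+ 2.
  by move=> tz; field.
rewrite mulf_eq0 subr_eq0 addr_eq0 => /orP [] /eqP Hr2.
  left; rewrite !ex // Ht2 exprMn Hr2 mul1r //.
right; rewrite !ex // Ht2 exprMn Hr2.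
apply/eqP; rewrite -subr_eq0; apply/eqP.
rewrite mulN1r invrN mulrN; set s := A ^+ 2 / t1 ^+ 2.
transitivity (- ((3%:R : K) * A)); last by rewrite three0 mul0r oppr0.
ring.
Qed.

Lemma key (t u : K) : (t + u) ^+ q.+1 + (t - u) ^+ q.+1 = 2%:R * (t ^+ q.+1 + u ^+ q.+1).
Proof. rewrite !exprSr frobD frobB; ring. Qed.

Lemma pair_nz (A B z1 w1 z2 w2 : K) : A != 0 ->
  z1 ^+ 2 - w1 ^+ 2 = A -> z2 ^+ 2 - w2 ^+ 2 = A ->
  z1 ^+ q.+1 + w1 ^+ q.+1 = B -> z2 ^+ q.+1 + w2 ^+ q.+1 = B ->
  z1 ^+ N = z1 -> w1 ^+ N = w1 -> z2 ^+ N = z2 -> w2 ^+ N = w2 ->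
  w2 ^+ 2 = w1 ^+ 2 \/ w2 ^+ 2 = - w1 ^+ 2 - A.
Proof.
move=> Anz e1 e2 b1 b2 fz1 fw1 fz2 fw2.
have gen z w : z ^+ 2 - w ^+ 2 = A -> z ^+ N = z -> w ^+ N = w ->
   let t := - (z + w) in let u := w - z in
   [/\ t * u = A, t != 0 /\ u != 0, z = t + u, w = t - u & (t ^+ N = t /\ u ^+ N = u)].
  move=> e fz fw t u.
  have tu : t * u = A by rewrite -e /t /u; ring.
  have tz : t != 0 by apply: contraNneq Anz; rewrite -tu => ->; rewrite mul0r.
  have uz : u != 0 by apply: contraNneq Anz; rewrite -tu => ->; rewrite mulr0.
  split => //.
  - apply/eqP; rewrite -subr_eq0; apply/eqP.
    transitivity ((3%:R : K) * z); last by rewrite three0 mul0r.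
    by rewrite /t /u; ring.
  - apply/eqP; rewrite -subr_eq0; apply/eqP.
    transitivity ((3%:R : K) * w); last by rewrite three0 mul0r.
    by rewrite /t /u; ring.
  - by split; [apply: fin_opp; apply: fin_add | apply: fin_add => //; apply: fin_opp].
have [tu1 [tz1 uz1] hz1 hw1 [ft1 fu1]] := gen _ _ e1 fz1 fw1.
have [tu2 [tz2 uz2] hz2 hw2 [ft2 fu2]] := gen _ _ e2 fz2 fw2.
set t1 := - (z1 + w1) in tu1 tz1 uz1 hz1 hw1 ft1 *.
set u1 := w1 - z1 in tu1 tz1 uz1 hz1 hw1 fu1 *.
set t2 := - (z2 + w2) in tu2 tz2 uz2 hz2 hw2 ft2 *.
set u2 := w2 - z2 in tu2 tz2 uz2 hz2 hw2 fu2 *.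
have ua1 : u1 = A / t1 by rewrite -tu1 [t1 * _]mulrC mulfK.
have ua2 : u2 = A / t2 by rewrite -tu2 [t2 * _]mulrC mulfK.
move: b1 b2; rewrite hz1 hw1 hz2 hw2 !key => b1 b2.
have sum : t1 ^+ q.+1 + u1 ^+ q.+1 = t2 ^+ q.+1 + u2 ^+ q.+1.
  by apply: (mulfI two_neq0); rewrite b1 b2.
have prod1 : t1 ^+ q.+1 * u1 ^+ q.+1 = A ^+ q.+1 by rewrite -exprMn tu1.
have prod2 : t2 ^+ q.+1 * u2 ^+ q.+1 = A ^+ q.+1 by rewrite -exprMn tu2.
have : (t2 ^+ q.+1 - t1 ^+ q.+1) * (t2 ^+ q.+1 - u1 ^+ q.+1) = 0.
  transitivity (t2 ^+ q.+1 * t2 ^+ q.+1 - t2 ^+ q.+1 * (t1 ^+ q.+1 + u1 ^+ q.+1)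
     + t1 ^+ q.+1 * u1 ^+ q.+1); first by ring.
  rewrite sum prod1 -prod2; ring.
idtac.
move/eqP; rewrite mulf_eq0 !subr_eq0 => /orP [] /eqP H.
  by rewrite ua2 ua1; apply: core => //; rewrite H.
rewrite ua2 ua1.
have -> : (t1 - A / t1) ^+ 2 = (u1 - A / u1) ^+ 2.
  rewrite -ua1 (_ : A / u1 = t1); first by rewrite -sqrrN opprB.
  by rewrite -tu1 mulfK.
by apply: core => //; rewrite -H.
Qed.

Lemma pair_0 (w1 w2 : K) : w1 ^+ q.+1 = w2 ^+ q.+1 ->
  w1 ^+ N = w1 -> w2 ^+ N = w2 ->
  w2 ^+ 2 = w1 ^+ 2 \/ w2 ^+ 2 = - w1 ^+ 2 - 0.
Proof.
move=> Hq f1 f2; rewrite subr0.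
have [w10|nz1] := eqVneq w1 0.
  move: Hq; rewrite w10 exprS mul0r => /esym/eqP; rewrite expf_eq0 => /andP [_ /eqP ->].
  by left.
have nz2 : w2 != 0.
  by apply: contraNneq nz1 => H; move: Hq; rewrite H [0 ^+ _]exprS mul0r => /eqP; rewrite expf_eq0 => /andP [].
pose r := w2 / w1.
have Hr : r ^+ q.+1 = 1 by rewrite /r exprMn exprVn -Hq divff // expf_neq0.
have := r4 ok cop Hr (fin_div f2 f1); move=> /eqP; rewrite -subr_eq0.
have -> : r ^+ 4 - 1 = (r ^+ 2 - 1) * (r ^+ 2 + 1) by ring.
have Ht2 : w2 = r * w1 by rewrite /r divfK.
rewrite mulf_eq0 subr_eq0 addr_eq0 => /orP [] /eqP Hr2.
  by left; rewrite Ht2 exprMn Hr2 mul1r.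
by right; rewrite Ht2 exprMn Hr2 mulN1r.
Qed.

End K.

Section Main.
Variables (F : finFieldType) (n k : nat).
Hypotheses (ok : odd k) (cop : coprime k n) (pF : 3%N \in [pchar F])
  (hcard : #|F| = (3 ^ n)%N).
Variable j : nat.
Hypothesis hj : (3 ^ k + 1 = 4 + 8 * j)%N.
Local Notation d := (2 + 4 * j)%N.

Lemma sol_pair (x1 x2 a b : F) :
  (x1 + a) ^+ d - (-1) * x1 ^+ d = b -> (x2 + a) ^+ d - (-1) * x2 ^+ d = b ->
  x2 = x1 \/ x2 = - x1 - a.
Proof.
rewrite !mulN1r !opprK => H1 H2.
have [K [iota _]] := countable_algebraic_closure F.
have pK : 3%N \in [pchar K] by rewrite (fmorph_pchar iota).
have sq (y : K) : exists w : K, w ^+ 2 = y.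
  have [w Hw] := @solve_monicpoly K 2 (nth 0 [:: y]) isT.
  by exists w; rewrite Hw !big_ord_recl big_ord0 /= expr0 mulr1 mul0r !addr0.
have finF (x : F) : (iota x) ^+ (3 ^ n)%N = iota x by rewrite -rmorphXn -hcard expf_card.
have hd2 : (d * 2 = (3 ^ k).+1)%N by move: hj; lia.
have [w1 hw1] := sq (iota x1).
have [w2 hw2] := sq (iota x2).
have [z1 hz1] := sq (iota (x1 + a)).
have [z2 hz2] := sq (iota (x2 + a)).
have fw1 := fin_sqrt pK hw1 (finF _).
have fw2 := fin_sqrt pK hw2 (finF _).
have fz1 := fin_sqrt pK hz1 (finF _).
have fz2 := fin_sqrt pK hz2 (finF _).
have tr (x : F) z w : z ^+ 2 = iota (x + a) -> w ^+ 2 = iota x ->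
    (x + a) ^+ d + x ^+ d = b -> z ^+ (3 ^ k).+1 + w ^+ (3 ^ k).+1 = iota b.
  move=> hz hw <-; rewrite rmorphD !rmorphXn -hz -hw -!exprM mulnC hd2 //.
have b1 := tr _ _ _ hz1 hw1 H1.
have b2 := tr _ _ _ hz2 hw2 H2.
suff : iota x2 = iota x1 \/ iota x2 = - iota x1 - iota a.
  case => [/fmorph_inj -> | ]; first by left.
  by rewrite -rmorphN -rmorphB => /fmorph_inj ->; right.
rewrite -hw1 -hw2.
have [a0|anz] := eqVneq a 0.
  rewrite a0 rmorph0; apply: (pair_0 ok cop) => //.
  have e (z w : K) : z ^+ 2 = w ^+ 2 -> z ^+ (3 ^ k).+1 = w ^+ (3 ^ k).+1.
    by move=> h; rewrite -hd2 (mulnC d 2) exprM h exprM.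
  rewrite a0 addr0 -hw1 in hz1; rewrite a0 addr0 -hw2 in hz2.
  have h2 (x : K) : x + x = - x.
    apply/eqP; rewrite -subr_eq0 opprK -mulr2n -mulrSr -mulr_natl.
    by rewrite (pcharf0 pK) mul0r.
  move: b1 b2; rewrite (e _ _ hz1) (e _ _ hz2) !h2 => <-.
  by move/oppr_inj.
apply: (pair_nz pK ok cop (B := iota b) (z1 := z1) (z2 := z2)) => //.
- by rewrite fmorph_eq0.
- by rewrite hz1 hw1 rmorphD addrAC subrr add0r.
- by rewrite hz2 hw2 rmorphD addrAC subrr add0r.
Qed.

End Main.

Theorem theorem4 (n k : nat) (F : finFieldType) :
  (0 < n)%N -> (0 < k)%N -> odd k -> coprime k n ->
  3%N \in [pchar F] -> #|F| = (3 ^ n)%N ->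
  APcN (fun x : F => x ^+ ((3 ^ k + 1) %/ 2)) (-1).
Proof.
move=> _ _ ok cop pF hcard.
have [m hm] : exists m, k = m.*2.+1.
  by exists k./2; rewrite -[LHS](odd_double_half k) ok add1n.
have [j hj] := odd_form m; rewrite -hm in hj.
have hd : ((3 ^ k + 1) %/ 2 = 2 + 4 * j)%N by rewrite hj; lia.
rewrite /APcN /cdiff_unif hd.
apply/eqP; rewrite eqn_leq; apply/andP; split.
- apply/bigmax_leqP => [[a b]] _ /=.
  rewrite /cdiff_count.
  set S := [set x : F | _].
  have [->|[x1 Hx1]] := set_0Vmem S; first by rewrite cards0.
  have sub : S \subset [set x1; - x1 - a].
    apply/subsetP => x Hx; rewrite !inE.
    move: Hx1 Hx; rewrite !inE => /eqP h1 /eqP h2.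
    by case: (sol_pair ok cop pF hcard hj h1 h2) => ->; rewrite eqxx ?orbT.
  apply: (leq_trans (subset_leq_card sub)).
  by rewrite cards2; case: (_ != _).
- apply: leq_trans (leq_bigmax_cond ((1 : F), (1 : F)) _); last by rewrite /= oner_neq0 orbT.
  rewrite /cdiff_count /=.
  apply: (@leq_trans #|[set (0 : F); -1]|).
    by rewrite cards2 eq_sym oppr_eq0 oner_neq0.
  apply: subset_leq_card; apply/subsetP => x; rewrite !inE => /orP [] /eqP ->.
    have z0 : (0 : F) ^+ (2 + 4 * j)%N = 0 by rewrite addSn exprS mul0r.
    by rewrite add0r expr1n z0 mulr0 subr0.
  have z0 : (0 : F) ^+ (2 + 4 * j)%N = 0 by rewrite addSn exprS mul0r.
  by rewrite addNr z0 mulN1r opprK add0r -signr_odd oddD oddM.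
Qed.
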